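(* Let $\mathbb{X}$ be a basic reverse differential restriction category with countable disjoint joins. Let $b_T,b_F:\Gamma\times U\to 1$ be maps with $\overline{b_T}\,\overline{b_F}$ nowhere defined, and let $m,n,v:\Gamma\times U\to T$ be maps. For any map $h:\Gamma\times U\to X$ write $h':=(\pi_0\times 1_U)h:(\Gamma\times U)\times U\to X$. Then $$\langle\langle 1,\pi_1\rangle,v\rangle R\big[\overline{b_T'}\,m'\vee\overline{b_F'}\,n'\big]\pi_1=\overline{b_T}\,\langle\langle 1,\pi_1\rangle,v\rangle R[m']\pi_1\ \vee\ \overline{b_F}\,\langle\langle 1,\pi_1\rangle,v\rangle R[n']\pi_1,$$ where $\langle 1,\pi_1\rangle:\Gamma\times U\to(\Gamma\times U)\times U$. In SDPL terms: $$[\![\Gamma,x{:}U\vdash v.\mathrm{rd}(x{:}U.\ \texttt{if } b\texttt{ then }m\texttt{ else }n)(x)]\!]=[\![\Gamma,x{:}U\vdash \texttt{if } b\texttt{ then } v.\mathrm{rd}(x{:}U.m)(x)\texttt{ else }v.\mathrm{rd}(x{:}U.n)(x)]\!].$$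
   Context: Composition is written in diagrammatic order: $fg$ means ''first $f$, then $g$''. A restriction category is a category with an operation sending each $f:A\to B$ to a map $\bar f:A\to A$ such that $\bar f f=f$, $\bar f\bar g=\bar g\bar f$ (for $f,g$ with common domain), $\overline{\bar f g}=\bar f\bar g$, and $f\bar g=\overline{fg}\,f$. A map $f$ is total if $\bar f=1$. For parallel maps: - $f\le g$ means $\bar f g=f$; - a nowhere-defined map $\emptyset$ is a least element for $\le$; - $f,g$ are disjoint if $\bar f g$ is nowhere defined; - the join $\bigvee_i f_i$ of a family is its least upper bound for $\le$. ''Countable disjoint joins'' means that every countable family of pairwise disjoint parallel maps has a join, and composition preserves such joins on both sides: $h(\bigvee_i f_i)k=\bigvee_i hf_ik$. The category has restriction products if: - there is an object $1$ with a total map $!_A:A\to 1$ for each $A$ such that every $f:A\to1$ equals $\bar f\,!_A$; - for all $A,B$ there is an object $A\times B$ with total maps $\pi_0,\pi_1$ such that for all $f:C\to A$, $g:C\to B$ there is a unique $\langle f,g\rangle$ with $\langle f,g\rangle\pi_0=\bar g f$ and $\langle f,g\rangle\pi_1=\bar f g$. Write $f\times g=\langle\pi_0f,\pi_1g\rangle$. A Cartesian left additive restriction category is a restriction category with restriction products in which every hom-set is a commutative monoid $(+,0)$ such that: - $\overline{f+g}=\bar f\bar g$ and $\bar 0=1$; - $x(f+g)=xf+xg$ and $x0=\bar x 0$; - $(f+g)\pi_i=f\pi_i+g\pi_i$ and $0\pi_i=0$. Write $\iota_0=\langle 1,0\rangle$ and $\iota_1=\langle 0,1\rangle$. A basic reverse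 differential restriction category is a Cartesian left additive restriction category with an operation sending each $f:A\to B$ to $R[f]:A\times B\to A$ satisfying: - [RD.1] $R[f+g]=R[f]+R[g]$ and $R[0]=0$. - [RD.2] $\langle a,b+c\rangle R[f]=\langle a,b\rangle R[f]+\langle a,c\rangle R[f]$ and $\langle a,0\rangle R[f]=\overline{af}\,0$. - [RD.3] $R[\pi_j]=\pi_1\iota_j$. - [RD.4] $R[\langle f,g\rangle]=(1\times\pi_0)R[f]+(1\times\pi_1)R[g]$. - [RD.5] $R[fg]=\langle\pi_0,\langle\pi_0f,\pi_1\rangle R[g]\rangle R[f]$. - [RD.8] $\overline{R[f]}=\bar f\times 1$. - [RD.9] $R[\bar f]=(\bar f\times1)\pi_1$. Semantics of SDPL used in the second formulation: - A predicate $b$ is interpreted by a pair $(b_T,b_F)$ of maps into $1$ with disjoint restrictions. - $[\![\texttt{if } b\texttt{ then }m\texttt{ else }n]\!]=\overline{b_T}[\![m]\!]\vee\overline{b_F}[\![n]\!]$. - $[\![v.\mathrm{rd}(x.m)(a)]\!]=\langle\langle 1,[\![a]\!]\rangle,[\![v]\!]\rangle R[[\![m]\!]]\pi_1$. - The term $m$ under the rebinding of $x$ in context $(\Gamma\times U)\times U$ is interpreted as $m'$. *)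

(* Defs.v *)
(* Composition is diagrammatic:  f ;; g  means "first f, then g". *)

Record Cat := {
  Ob : Type;
  Hom : Ob -> Ob -> Type;
  idm : forall A, Hom A A;
  comp : forall A B C, Hom A B -> Hom B C -> Hom A C;
  comp_id_l : forall A B (f : Hom A B), comp _ _ _ (idm A) f = f;
  comp_id_r : forall A B (f : Hom A B), comp _ _ _ f (idm B) = f;
  comp_assoc : forall A B C D (f : Hom A B) (g : Hom B C) (h : Hom C D),
      comp _ _ _ (comp _ _ _ f g) h = comp _ _ _ f (comp _ _ _ g h)
}.
Arguments Hom {c} A B.
Arguments idm {c} A.
Arguments comp {c A B C} f g.
Notation "f ;; g" := (comp f g) (at level 40, left associativity).

Record RestrCat := {
  rc :> Cat;
  rst : forall (A B : Ob rc), Hom A B -> Hom A A;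
  R1 : forall A B (f : Hom A B), rst _ _ f ;; f = f;
  R2 : forall A B C (f : Hom A B) (g : Hom A C),
      rst _ _ f ;; rst _ _ g = rst _ _ g ;; rst _ _ f;
  R3 : forall A B C (f : Hom A B) (g : Hom A C),
      rst _ _ (rst _ _ f ;; g) = rst _ _ f ;; rst _ _ g;
  R4 : forall A B C (f : Hom A B) (g : Hom B C),
      f ;; rst _ _ g = rst _ _ (f ;; g) ;; f
}.
Arguments rst {r A B} f.

Section RestrDefs.
Context {X : RestrCat}.
Definition total {A B : Ob X} (f : Hom A B) : Prop := rst f = idm A.
Definition rle {A B : Ob X} (f g : Hom A B) : Prop := rst f ;; g = f.
Definition nowhere_defined {A B : Ob X} (f : Hom A B) : Prop :=
  forall g : Hom A B, rle f g.
Definition rdisjoint {A B : Ob X} (f g : Hom A B) : Prop :=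
  nowhere_defined (rst f ;; g).
Definition pairwise_disjoint {A B : Ob X} (f : nat -> Hom A B) : Prop :=
  forall i j, i <> j -> rdisjoint (f i) (f j).
Definition is_join {A B : Ob X} (f : nat -> Hom A B) (j : Hom A B) : Prop :=
  (forall i, rle (f i) j) /\
  (forall g, (forall i, rle (f i) g) -> rle j g).
End RestrDefs.

Record RProdCat := {
  pc :> RestrCat;
  one : Ob pc;
  bang : forall A : Ob pc, Hom A one;
  bang_total : forall A, total (bang A);
  one_term : forall A (f : Hom A one), f = rst f ;; bang A;
  prod : Ob pc -> Ob pc -> Ob pc;
  pi0 : forall A B, Hom (prod A B) A;
  pi1 : forall A B, Hom (prod A B) B;
  pi0_total : forall A B, total (pi0 A B);
  pi1_total : forall A B, total (pi1 A B);
  pair : forall C A B, Hom C A -> Hom C B -> Hom C (prod A B);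
  pair_pi0 : forall C A B (f : Hom C A) (g : Hom C B),
      pair _ _ _ f g ;; pi0 A B = rst g ;; f;
  pair_pi1 : forall C A B (f : Hom C A) (g : Hom C B),
      pair _ _ _ f g ;; pi1 A B = rst f ;; g;
  pair_unique : forall C A B (f : Hom C A) (g : Hom C B) (h : Hom C (prod A B)),
      h ;; pi0 A B = rst g ;; f -> h ;; pi1 A B = rst f ;; g ->
      h = pair _ _ _ f g
}.
Arguments one {r}.
Arguments bang {r} A.
Arguments prod {r} A B.
Arguments pi0 {r A B}.
Arguments pi1 {r A B}.
Arguments pair {r C A B} f g.

Definition fprod {X : RProdCat} {A B A' B' : Ob X} (f : Hom A A') (g : Hom B B')
  : Hom (prod A B) (prod A' B') := pair (pi0 ;; f) (pi1 ;; g).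

Record CLARC := {
  lc :> RProdCat;
  add : forall (A B : Ob lc), Hom A B -> Hom A B -> Hom A B;
  zero : forall (A B : Ob lc), Hom A B;
  add_assoc : forall A B (f g h : Hom A B),
      add _ _ (add _ _ f g) h = add _ _ f (add _ _ g h);
  add_comm : forall A B (f g : Hom A B), add _ _ f g = add _ _ g f;
  add_zero_l : forall A B (f : Hom A B), add _ _ (zero A B) f = f;
  rst_add : forall A B (f g : Hom A B), rst (add _ _ f g) = rst f ;; rst g;
  rst_zero : forall A B, rst (zero A B) = idm A;
  comp_add : forall C A B (x : Hom C A) (f g : Hom A B),
      x ;; add _ _ f g = add _ _ (x ;; f) (x ;; g);
  comp_zero : forall C A B (x : Hom C A), x ;; zero A B = rst x ;; zero C B;
  add_pi0 : forall C A B (f g : Hom C (prod A B)),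
      add _ _ f g ;; pi0 = add _ _ (f ;; pi0) (g ;; pi0);
  add_pi1 : forall C A B (f g : Hom C (prod A B)),
      add _ _ f g ;; pi1 = add _ _ (f ;; pi1) (g ;; pi1);
  zero_pi0 : forall C A B, zero C (prod A B) ;; pi0 = zero C A;
  zero_pi1 : forall C A B, zero C (prod A B) ;; pi1 = zero C B
}.
Arguments add {c A B} f g.
Arguments zero {c} A B.

Record BRDRC := {
  dc :> CLARC;
  RD : forall (A B : Ob dc), Hom A B -> Hom (prod A B) A;
  RD1_add : forall A B (f g : Hom A B), RD _ _ (add f g) = add (RD _ _ f) (RD _ _ g);
  RD1_zero : forall A B, RD _ _ (zero A B) = zero (prod A B) A;
  RD2_add : forall C A B (f : Hom A B) (a : Hom C A) (b c : Hom C B),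
      pair a (add b c) ;; RD _ _ f = add (pair a b ;; RD _ _ f) (pair a c ;; RD _ _ f);
  RD2_zero : forall C A B (f : Hom A B) (a : Hom C A),
      pair a (zero C B) ;; RD _ _ f = rst (a ;; f) ;; zero C A;
  RD3_pi0 : forall A B, RD _ _ (@pi0 _ A B) = pi1 ;; pair (idm A) (zero A B);
  RD3_pi1 : forall A B, RD _ _ (@pi1 _ A B) = pi1 ;; pair (zero B A) (idm B);
  RD4 : forall C A B (f : Hom C A) (g : Hom C B),
      RD _ _ (pair f g) =
      add (fprod (idm C) pi0 ;; RD _ _ f) (fprod (idm C) pi1 ;; RD _ _ g);
  RD5 : forall A B C (f : Hom A B) (g : Hom B C),
      RD _ _ (f ;; g) = pair pi0 (pair (pi0 ;; f) pi1 ;; RD _ _ g) ;; RD _ _ f;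
  RD8 : forall A B (f : Hom A B), rst (RD _ _ f) = fprod (rst f) (idm B);
  RD9 : forall A B (f : Hom A B), RD _ _ (rst f) = fprod (rst f) (idm A) ;; pi1
}.
Arguments RD {_ A B} f.

(* ---------- with countable disjoint joins ----------
   Countable families are indexed by nat (finite ones padded with a
   nowhere-defined map); the empty family's join is a nowhere-defined map. *)
Record BRDRCJ := {
  jc :> BRDRC;
  bot : forall (A B : Ob jc), Hom A B;
  bot_nowhere : forall A B, nowhere_defined (bot A B);
  bot_comp : forall A B C D (h : Hom A B) (k : Hom C D),
      nowhere_defined (h ;; bot B C ;; k);
  join : forall (A B : Ob jc), (nat -> Hom A B) -> Hom A B;
  join_is_join : forall A B (f : nat -> Hom A B),
      pairwise_disjoint f -> is_join f (join _ _ f);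
  join_comp : forall A B C D (h : Hom A B) (f : nat -> Hom B C) (k : Hom C D),
      pairwise_disjoint f ->
      h ;; join _ _ f ;; k = join _ _ (fun i => h ;; f i ;; k)
}.
Arguments bot {_} A B.
Arguments join {_ A B} f.

Definition join2 {X : BRDRCJ} {A B : Ob X} (f g : Hom A B) : Hom A B :=
  join (fun i => match i with 0 => f | 1 => g | _ => bot A B end).

Definition rebind {X : BRDRCJ} {G U Y : Ob X} (h : Hom (prod G U) Y)
  : Hom (prod (prod G U) U) Y := fprod (@pi0 _ G U) (idm U) ;; h.

(* Main.v *)
Require Import Defs.
From Stdlib Require Import FunctionalExtensionality Setoid.

Section S.
Context {X : BRDRCJ}.


Lemma rst_idm (A : Ob X) : rst (idm A) = idm A.
Proof. rewrite <- (comp_id_r _ _ _ (rst (idm A))). apply R1. Qed.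

Lemma rst_rst {A B : Ob X} (f : Hom A B) : rst (rst f) = rst f.
Proof. rewrite <- (comp_id_r _ _ _ (rst f)) at 1. rewrite R3, rst_idm, comp_id_r. reflexivity. Qed.

Lemma rst_rst_comp {A B C : Ob X} (f : Hom A B) (g : Hom A C) :
  rst (rst f ;; g) = rst f ;; rst g.
Proof. apply R3. Qed.

Lemma rst_idem {A B : Ob X} (f : Hom A B) : rst f ;; rst f = rst f.
Proof. rewrite <- (rst_rst f) at 1. apply R1. Qed.

Lemma rst_comp_le {A B C : Ob X} (f : Hom A B) (g : Hom B C) :
  rst (f ;; g) ;; rst f = rst (f ;; g).
Proof. rewrite R2, <- R3, <- comp_assoc, R1. reflexivity. Qed.

Lemma rst_comp_rst {A B C : Ob X} (f : Hom A B) (g : Hom B C) :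
  rst (f ;; rst g) = rst (f ;; g).
Proof. rewrite R4, R3. apply rst_comp_le. Qed.

Lemma rst_comp_total {A B C : Ob X} (f : Hom A B) (g : Hom B C) :
  total g -> rst (f ;; g) = rst f.
Proof. intro H. rewrite <- rst_comp_rst, H, comp_id_r. reflexivity. Qed.

Lemma R4r {A B C : Ob X} (f : Hom A B) (g : Hom B C) :
  rst (f ;; g) ;; f = f ;; rst g.
Proof. symmetry; apply R4. Qed.

Lemma rle_antisym {A B : Ob X} (f g : Hom A B) : rle f g -> rle g f -> f = g.
Proof.
  unfold rle; intros H1 H2.
  assert (E1 : rst f = rst f ;; rst g).
  { transitivity (rst (rst f ;; g)). rewrite H1; reflexivity. apply R3. }
  assert (E2 : rst g = rst g ;; rst f).
  { transitivity (rst (rst g ;; f)). rewrite H2; reflexivity. apply R3. }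
  assert (E : rst f = rst g) by (rewrite E1 at 1; rewrite R2, <- E2; reflexivity).
  rewrite <- H1, E; apply R1.
Qed.

Lemma nowhere_bot {A B : Ob X} (k : Hom A B) : nowhere_defined k -> k = bot A B.
Proof. intro H. apply rle_antisym. apply H. apply bot_nowhere. Qed.

Lemma nowhere_comp3 {A B C D : Ob X} (h : Hom A B) (k : Hom B C) (l : Hom C D) :
  nowhere_defined k -> nowhere_defined (h ;; k ;; l).
Proof. intro H. rewrite (nowhere_bot k H). apply bot_comp. Qed.

Lemma nowhere_compl {A B C : Ob X} (h : Hom A B) (k : Hom B C) :
  nowhere_defined k -> nowhere_defined (h ;; k).
Proof. intro H. rewrite <- (comp_id_r _ _ _ (h;;k)). apply nowhere_comp3, H. Qed.

Lemma nowhere_compr {A B C : Ob X} (k : Hom A B) (l : Hom B C) :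
  nowhere_defined k -> nowhere_defined (k ;; l).
Proof. intro H. rewrite <- (comp_id_l _ _ _ k). apply nowhere_comp3, H. Qed.

Lemma nowhere_rst {A B : Ob X} (k : Hom A B) : nowhere_defined k -> nowhere_defined (rst k).
Proof.
  intro H. assert (Hz : total (zero B A)) by apply rst_zero.
  assert (H2 : nowhere_defined (k ;; zero B A)) by (apply nowhere_compr, H).
  assert (E : rst (k ;; zero B A) = k ;; zero B A).
  { transitivity (rst (k;;zero B A) ;; rst (k;;zero B A)). symmetry; apply rst_idem. apply H2. }
  rewrite <- (rst_comp_total k (zero B A) Hz), E. exact H2.
Qed.

Lemma comp_pair {C' C A B : Ob X} (x : Hom C' C) (a : Hom C A) (b : Hom C B) :
  x ;; pair a b = pair (x ;; a) (x ;; b).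
Proof.
  apply pair_unique.
  - rewrite comp_assoc, pair_pi0, <- comp_assoc, R4, comp_assoc. reflexivity.
  - rewrite comp_assoc, pair_pi1, <- comp_assoc, R4, comp_assoc. reflexivity.
Qed.

Lemma pair_proj (A B : Ob X) : pair (@pi0 X A B) pi1 = idm (prod A B).
Proof.
  symmetry. apply pair_unique.
  - rewrite comp_id_l, (pi1_total X A B), comp_id_l. reflexivity.
  - rewrite comp_id_l, (pi0_total X A B), comp_id_l. reflexivity.
Qed.

Lemma rst_pair {C A B : Ob X} (a : Hom C A) (b : Hom C B) :
  rst (pair a b) = rst a ;; rst b.
Proof.
  rewrite <- (rst_comp_total (pair a b) pi1 (pi1_total X A B)), pair_pi1. apply R3.
Qed.

Lemma fprod_rst {A B C : Ob X} (e : Hom A C) :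
  fprod (rst e) (idm B) = rst (@pi0 X A B ;; e).
Proof.
  unfold fprod. symmetry. apply pair_unique; rewrite !comp_id_r.
  - rewrite R4r, (pi1_total X A B), comp_id_l. reflexivity.
  - rewrite rst_comp_rst. reflexivity.
Qed.

Lemma join_ext {A B : Ob X} (f g : nat -> Hom A B) : (forall i, f i = g i) -> join f = join g.
Proof. intro H. f_equal. apply functional_extensionality, H. Qed.

Lemma disjoint_rst {A B : Ob X} (f : nat -> Hom A B) :
  pairwise_disjoint f -> pairwise_disjoint (fun i => rst (f i)).
Proof.
  intros H i j Hij. unfold rdisjoint. rewrite rst_rst, <- R3. apply nowhere_rst, H, Hij.
Qed.

Lemma disjoint_comp {A' A B B' : Ob X} (x : Hom A' A) (f : nat -> Hom A B) (y : Hom B B') :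
  pairwise_disjoint f -> pairwise_disjoint (fun i => x ;; f i ;; y).
Proof.
  intros H i j Hij. unfold rdisjoint.
  replace (rst (x ;; f i ;; y) ;; (x ;; f j ;; y)) with ((x ;; rst (f i ;; y)) ;; (rst (f i) ;; f j) ;; y).
  - apply nowhere_comp3, H, Hij.
  - rewrite <- (rst_comp_le (f i) y). rewrite !comp_assoc.
    rewrite <- (comp_assoc _ _ _ _ _ (rst (x;;(f i;;y))) x), R4r.
    rewrite !comp_assoc.
    rewrite <- (comp_assoc _ _ _ _ _ (rst (f i)) (rst (f i))), rst_idem, <- (comp_assoc _ _ _ _ _ (rst (f i;;y)) (rst (f i))), rst_comp_le. reflexivity.
Qed.

Lemma rst_join {A B : Ob X} (f : nat -> Hom A B) :
  pairwise_disjoint f -> rst (join f) = join (fun i => rst (f i)).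
Proof.
  intro Hd. destruct (join_is_join _ _ _ f Hd) as [Hub _].
  destruct (join_is_join _ _ _ _ (disjoint_rst f Hd)) as [_ Hlub].
  set (j := join f) in *. set (e := join (fun i => rst (f i))) in *.
  assert (Hle : rle e (rst j)).
  { apply Hlub. intro i. unfold rle. rewrite rst_rst.
    rewrite <- R3. unfold rle in Hub. rewrite (Hub i). reflexivity. }
  assert (Hej : e ;; j = j).
  { unfold e. rewrite <- (comp_id_l _ _ _ (join (fun i => rst (f i)))).
    rewrite join_comp by (apply disjoint_rst, Hd).
    unfold j. apply join_ext. intro i. rewrite comp_id_l. apply Hub. }
  unfold rle in Hle. rewrite <- Hej, <- Hle, comp_assoc, R1, R3, Hle. reflexivity.
Qed.

Lemma join_single {A B : Ob X} (g : Hom A B) :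
  join (fun i => match i with 0 => g | S _ => bot A B end) = g.
Proof.
  assert (Hd : pairwise_disjoint (fun i => match i with 0 => g | S _ => bot A B end)).
  { intros [|i] [|j] Hij; unfold rdisjoint.
    - congruence.
    - apply nowhere_compl, bot_nowhere.
    - apply nowhere_compr, nowhere_rst, bot_nowhere.
    - apply nowhere_compl, bot_nowhere. }
  destruct (join_is_join _ _ _ _ Hd) as [Hub Hlub].
  apply rle_antisym.
  - apply Hlub. intros [|i]. unfold rle. apply R1. apply bot_nowhere.
  - apply (Hub 0).
Qed.

Lemma RD_rst {A C B : Ob X} (e : Hom A C) (f : Hom A B) :
  RD (rst e ;; f) = rst (@pi0 X A B ;; e) ;; RD f.
Proof.
  rewrite RD5, RD9, fprod_rst.
  assert (E1 : pair (pi0 ;; rst e) (@pi1 X A B) = rst (pi0 ;; e)).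
  { rewrite <- fprod_rst. unfold fprod. rewrite comp_id_r. reflexivity. }
  rewrite E1.
  set (Xx := rst (@pi0 X A B ;; e) ;; RD f).
  rewrite <- comp_assoc, R4.
  rewrite <- comp_assoc, pair_pi0.
  rewrite (comp_assoc _ _ _ _ _ (rst Xx) pi0 e), R3, comp_assoc, pair_pi1,
    (pi0_total X A B), comp_id_l.
  unfold Xx. rewrite R3. rewrite !comp_assoc.
  set (a := rst (@pi0 X A B ;; e)).
  assert (Ha : forall Z (k : Hom (prod A B) Z), a ;; (a ;; k) = a ;; k).
  { intros Z k. rewrite <- comp_assoc. unfold a. rewrite rst_idem. reflexivity. }
  rewrite Ha, <- (comp_assoc _ _ _ _ _ (rst (RD f)) a). unfold a.
  rewrite (R2 _ _ _ _ (RD f) (pi0 ;; e)). fold a. rewrite comp_assoc, Ha, R1. reflexivity.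
Qed.

Lemma rst_comp_rstcomp {A0 A B C : Ob X} (x : Hom A0 A) (a : Hom A B) (b : Hom A C) :
  rst (x ;; (rst a ;; b)) = rst (x ;; a) ;; rst (x ;; b).
Proof. rewrite <- comp_assoc, <- R4r, comp_assoc, R3. reflexivity. Qed.

Lemma RD_self {A B : Ob X} (f : Hom A B) : rst (@pi0 X A B ;; f) ;; RD f = RD f.
Proof. rewrite <- fprod_rst, <- RD8. apply R1. Qed.

Lemma pair_id_Q (G U : Ob X) :
  pair (idm (prod G U)) pi1 ;; fprod (@pi0 X G U) (idm U) = idm (prod G U).
Proof.
  unfold fprod. rewrite comp_pair, <- !comp_assoc, pair_pi0, pair_pi1.
  rewrite (pi1_total X G U), rst_idm, !comp_id_l, comp_id_r. apply pair_proj.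
Qed.

Lemma branch {G U T : Ob X} (b : Hom (prod G U) one) (mm v : Hom (prod G U) T)
  (H : Hom (prod (prod G U) U) T) :
  let Q := fprod (@pi0 X G U) (idm U) in
  let P := pair (pair (idm (prod G U)) pi1) v in
  rst (Q ;; b) ;; H = rst (Q ;; b) ;; (Q ;; mm) ->
  P ;; (idm _ ;; rst (pi0 ;; (rst (Q ;; b) ;; (Q ;; mm)) ;; idm _) ;; RD H) ;; pi1
  = rst b ;; P ;; RD (Q ;; mm) ;; pi1.
Proof.
  intros Q P HH.
  rewrite comp_id_l, comp_id_r, rst_comp_rstcomp.
  rewrite (R2 _ _ _ _ (pi0 ;; (Q;;b))), (comp_assoc _ _ _ _ _ (rst (pi0;;(Q;;mm)))), <- RD_rst, HH, RD_rst.
  rewrite <- (comp_assoc _ _ _ _ _ (rst (pi0;;(Q;;mm)))), (R2 _ _ _ _ (pi0 ;; (Q;;mm))), (comp_assoc _ _ _ _ _ (rst (pi0;;(Q;;b)))), RD_self.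
  rewrite <- (comp_assoc _ _ _ _ _ P), R4.
  replace (P ;; (pi0 ;; (Q ;; b))) with (rst v ;; b).
  2:{ unfold P. rewrite <- comp_assoc, pair_pi0, comp_assoc, <- (comp_assoc _ _ _ _ _ _ Q), pair_id_Q, comp_id_l. reflexivity. }
  assert (HvP : rst v ;; P = P).
  { assert (E : rst P = rst v).
    { unfold P. rewrite rst_pair, rst_pair, rst_idm, (pi1_total X G U), !comp_id_l. reflexivity. }
    rewrite <- E. apply R1. }
  rewrite R3, comp_assoc, R2, !comp_assoc, <- (comp_assoc _ _ _ _ _ (rst v) P), HvP. reflexivity.
Qed.

Lemma disj_helper {A B C D E : Ob X} (a : Hom A B) (x : Hom A C) (c : Hom A D) (y : Hom A E) :
  rst (rst a ;; x) ;; (rst c ;; y) = rst x ;; (rst a ;; rst c) ;; y.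
Proof.
  rewrite R3, <- (comp_assoc _ _ _ _ _ (rst a ;; rst x)), (R2 _ _ _ _ a x), !comp_assoc. reflexivity.
Qed.

Lemma join_single1 {A B : Ob X} (g : Hom A B) :
  join (fun i => match i with 1 => g | _ => bot A B end) = g.
Proof.
  assert (Hd : pairwise_disjoint (fun i => match i with 1 => g | _ => bot A B end)).
  { intros [|[|i]] [|[|j]] Hij; unfold rdisjoint; try congruence;
      try (apply nowhere_compl, bot_nowhere);
      try (apply nowhere_compr, nowhere_rst, bot_nowhere). }
  destruct (join_is_join _ _ _ _ Hd) as [Hub Hlub].
  apply rle_antisym.
  - apply Hlub. intros [|[|i]]; try apply bot_nowhere. unfold rle. apply R1.
  - apply (Hub 1).
Qed.
End S.

Theorem mainTheorem4 (X : BRDRCJ) (G U T : Ob X)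
  (bT bF : Hom (prod G U) one)
  (hdisj : nowhere_defined (rst bT ;; rst bF))
  (m n v : Hom (prod G U) T) :
  pair (pair (idm (prod G U)) pi1) v
    ;; RD (join2 (rst (rebind bT) ;; rebind m) (rst (rebind bF) ;; rebind n))
    ;; pi1
  = join2 (rst bT ;; pair (pair (idm (prod G U)) pi1) v ;; RD (rebind m) ;; pi1)
          (rst bF ;; pair (pair (idm (prod G U)) pi1) v ;; RD (rebind n) ;; pi1).
Proof.
  unfold join2, rebind.
  set (Q := fprod (@pi0 X G U) (idm U)).
  set (P := pair (pair (idm (prod G U)) pi1) v).
  set (cT := rst (Q ;; bT)). set (cF := rst (Q ;; bF)).
  set (f := fun i => match i with 0 => cT ;; (Q ;; m) | 1 => cF ;; (Q ;; n) | _ => bot _ _ end).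
  assert (HcTF : nowhere_defined (cT ;; cF)).
  { unfold cT, cF. rewrite <- R3, <- comp_assoc, R4r, comp_assoc.
    apply nowhere_rst, nowhere_compl.
    replace (rst bT ;; bF) with ((rst bT ;; rst bF) ;; bF) by (rewrite comp_assoc, R1; reflexivity).
    apply nowhere_compr, hdisj. }
  assert (HcFT : nowhere_defined (cF ;; cT)).
  { unfold cT, cF in *. rewrite R2. exact HcTF. }
  assert (Hd : pairwise_disjoint f).
  { intros i j Hij. unfold rdisjoint, f.
    destruct i as [|[|i]]; destruct j as [|[|j]]; try congruence;
      try (apply nowhere_compl, bot_nowhere);
      try (apply nowhere_compr, nowhere_rst, bot_nowhere).
    - unfold cT, cF. rewrite disj_helper. apply nowhere_comp3, HcTF.
    - unfold cT, cF. rewrite disj_helper. apply nowhere_comp3, HcFT. }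
  set (H := join f).
  assert (HcTH : cT ;; H = cT ;; (Q ;; m)).
  { unfold H. rewrite <- (comp_id_r _ _ _ (cT ;; join f)), (join_comp _ _ _ _ _ cT f (idm _) Hd).
    rewrite <- (join_single (cT ;; (Q ;; m))). apply join_ext.
    intros [|[|i]]; unfold f; rewrite comp_id_r.
    - rewrite <- comp_assoc. unfold cT. rewrite rst_idem. reflexivity.
    - apply nowhere_bot. rewrite <- comp_assoc. apply nowhere_compr, HcTF.
    - apply nowhere_bot. apply nowhere_compl, bot_nowhere. }
  assert (HcFH : cF ;; H = cF ;; (Q ;; n)).
  { unfold H. rewrite <- (comp_id_r _ _ _ (cF ;; join f)), (join_comp _ _ _ _ _ cF f (idm _) Hd).
    rewrite <- (join_single1 (cF ;; (Q ;; n))). apply join_ext.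
    intros [|[|i]]; unfold f; rewrite comp_id_r.
    - apply nowhere_bot. rewrite <- comp_assoc. apply nowhere_compr, HcFT.
    - rewrite <- comp_assoc. unfold cF. rewrite rst_idem. reflexivity.
    - apply nowhere_bot. apply nowhere_compl, bot_nowhere. }
  assert (Hd1 : pairwise_disjoint (fun i => @pi0 X _ T ;; f i ;; idm _))
    by (apply disjoint_comp, Hd).
  assert (Hd2 : pairwise_disjoint (fun i => rst (@pi0 X _ T ;; f i ;; idm _)))
    by (apply disjoint_rst, Hd1).
  set (g := fun i => idm _ ;; rst (@pi0 X _ T ;; f i ;; idm _) ;; RD H).
  assert (Hd3 : pairwise_disjoint g) by (apply disjoint_comp, Hd2).
  assert (E : RD H = join g).
  { unfold g. rewrite <- (join_comp _ _ _ _ _ (idm _) _ (RD H) Hd2).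
    rewrite comp_id_l, <- (rst_join _ Hd1).
    rewrite <- (join_comp _ _ _ _ _ pi0 f (idm _) Hd).
    fold H. rewrite comp_id_r, <- fprod_rst, <- RD8, R1. reflexivity. }
  rewrite E, (join_comp _ _ _ _ _ P g pi1 Hd3).
  apply join_ext. intros [|[|i]]; unfold g.
  - exact (branch bT m v H HcTH).
  - exact (branch bF n v H HcFH).
  - apply nowhere_bot. unfold f.
    replace (P ;; (idm _ ;; rst (@pi0 X _ T ;; bot (prod (prod G U) U) T ;; idm T) ;; RD H) ;; pi1)
      with ((P ;; idm _) ;; rst (@pi0 X _ T ;; bot (prod (prod G U) U) T ;; idm T) ;; (RD H ;; pi1))
      by (rewrite !comp_assoc; reflexivity).
    apply nowhere_comp3, nowhere_rst, bot_comp.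
Qed.
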